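(* Assume (i) consistency: $Y=Y^a$ whenever $A=a$; (ii) treatment positivity: $\pi_a(\mathbf X)>0$ a.s. under $\mathbb P(\cdot\mid S=1)$ for all $a$; (iii) selection positivity: $\rho(\mathbf V)>0$ a.s.; (iv) there is a constant $\delta_1>0$ with $\big|\mathbb E[Y^a\mid \mathbf X,A=1,S=1]-\mathbb E[Y^a\mid\mathbf X,A=0,S=1]\big|\le\delta_1$ a.s. for all $a$; (v) there is a constant $\delta_2>0$ with $\big|\mathbb E[Y^a\mid \mathbf V,S=0]-\mathbb E[Y^a\mid \mathbf V,S=1]\big|\le\delta_2$ a.s. for all $a$. Then for each $a\in\{0,1\}$, $$\psi_a\in\Big[\mathbb E[\tau_a(\mathbf V)]-\delta_1\mathbb E[\mathbb P(A=1-a\mid \mathbf V,S=1)]-\delta_2\mathbb P(S=0),\ \mathbb E[\tau_a(\mathbf V)]+\delta_1\mathbb E[\mathbb P(A=1-a\mid \mathbf V,S=1)]+\delta_2\mathbb P(S=0)\Big],$$ $$\theta_a\in\Big[\mathbb E[\tau_a(\mathbf V)\mid S=0]-\delta_1\mathbb E[\mathbb P(A=1-a\mid\mathbf V,S=1)\mid S=0]-\delta_2,\ \mathbb E[\tau_a(\mathbf V)\mid S=0]+\delta_1\mathbb E[\mathbb P(A=1-a\mid\mathbf V,S=1)\mid S=0]+\delta_2\Big].$$ Consequently $$\psi_1-\psi_0\in\big[\mathbb E[\tau_1(\mathbf V)-\tau_0(\mathbf V)]-\delta_1-2\delta_2\mathbb P(S=0),\ \mathbb E[\tau_1(\mathbf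 V)-\tau_0(\mathbf V)]+\delta_1+2\delta_2\mathbb P(S=0)\big],$$ $$\theta_1-\theta_0\in\big[\mathbb E[\tau_1(\mathbf V)-\tau_0(\mathbf V)\mid S=0]-\delta_1-2\delta_2,\ \mathbb E[\tau_1(\mathbf V)-\tau_0(\mathbf V)\mid S=0]+\delta_1+2\delta_2\big].$$
   Context: Let $(\mathbf X,A,Y,S)$ be a random vector with covariates $\mathbf X\in\mathbb R^d$, binary treatment $A\in\{0,1\}$, real outcome $Y$, and source indicator $S\in\{0,1\}$ with $\mathbb P(S=0)>0$. $\mathbf V$ is a sub-vector of $\mathbf X$. $Y^a$ ($a\in\{0,1\}$) are integrable potential outcomes. Nuisance functions: $\pi_a(\mathbf x)=\mathbb P(A=a\mid \mathbf X=\mathbf x,S=1)$, $\rho(\mathbf v)=\mathbb P(S=1\mid \mathbf V=\mathbf v)$, $\mu_a(\mathbf x)=\mathbb E[Y\mid \mathbf X=\mathbf x,A=a,S=1]$, $\tau_a(\mathbf v)=\mathbb E[\mu_a(\mathbf X)\mid \mathbf V=\mathbf v,S=1]$. Targets: $\psi_a=\mathbb E[Y^a]$, $\theta_a=\mathbb E[Y^a\mid S=0]$. *)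

(* Defs.v *)
From HB Require Import structures.
From mathcomp Require Import all_boot all_order all_algebra.
From mathcomp Require Import all_classical all_reals all_analysis.
Set Implicit Arguments. Unset Strict Implicit. Unset Printing Implicit Defensive.
Import Order.TTheory GRing.Theory Num.Theory.
Local Open Scope classical_set_scope.
Local Open Scope ring_scope.

(* [cond_exp_on P E W Z g] : g is a version of the conditional expectation
   E[Z | W, E] (conditioning on the random element W within the event E),
   i.e. g is measurable, g(W) is integrable on E and for every measurable B,
   E[Z ; E /\ W in B] = E[g(W) ; E /\ W in B]. *)
Definition cond_exp_on {d dW : measure_display} {T : measurableType d}
  {TW : measurableType dW} {R : realType} (P : probability T R)
  (E : set T) (W : T -> TW) (Z : T -> R) (g : TW -> R) : Prop :=
  measurable_fun setT g /\
  P.-integrable E (EFin \o (g \o W)) /\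
  forall B : set TW, measurable B ->
    (\int[P]_(t in E `&` (W @^-1` B)) (Z t)%:E =
     \int[P]_(t in E `&` (W @^-1` B)) (g (W t))%:E)%E.

Definition cond_mean {d : measure_display} {T : measurableType d} {R : realType}
  (P : probability T R) (E : set T) (Z : T -> R) : \bar R :=
  ((\int[P]_(t in E) (Z t)%:E) * ((fine (P E))^-1)%:E)%E.

(* Main.v *)
Require Import Defs.
From HB Require Import structures.
From mathcomp Require Import all_boot all_order all_algebra.
From mathcomp Require Import all_classical all_reals all_analysis.
From mathcomp Require Import measurable_realfun.
From mathcomp Require Import lra ring.
Import Order.TTheory GRing.Theory Num.Theory.
Local Open Scope classical_set_scope.
Local Open Scope ring_scope.
Lemma RI_E {d} {T : measurableType d} {R : realType} {P : probability T R}
  {D : set T} {f : T -> R} : measurable D -> P.-integrable D (EFin \o f) ->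
  (\int[P]_(x in D) (f x)%:E)%E = (Rintegral P D f)%:E.
Proof. by move=> mD fi; rewrite /Rintegral fineK //; exact: integrable_fin_num. Qed.

Lemma G0 {d} {T : measurableType d} {R : realType} (P : probability T R)
  (M : set T) (h : T -> R) : measurable M -> measurable_fun M h ->
  (\int[P]_(x in M) (h x)%:E)%E = 0%E ->
  {ae P, forall t, M t -> 0 < h t} -> P M = 0%E.
Proof.
move=> mM mh h0 hpos.
have mhE : measurable_fun M (EFin \o h : T -> \bar R) by exact/measurable_EFinP.
have e1 : (\int[P]_(x in M) `|(h x)%:E|)%E = 0%E.
  rewrite -h0; apply: ae_eq_integral => //.
    by apply: measurableT_comp => //.
  by apply: filterS hpos => t ht Mt; rewrite gee0_abs // lee_fin ltW // ht.
have /ae_eq_integral_abs := e1.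
move=> /(_ mM mhE) h00.
have : {ae P, forall t, ~ M t}.
  apply: filterS2 hpos h00 => t h1 h2 Mt.
  have := h2 Mt; rewrite /= => -[] h3.
  by move: (h1 Mt); rewrite h3 ltxx.
case=> N [mN PN sub].
apply/eqP; rewrite -measure_le0 -PN le_measure ?inE //.
by move=> t Mt; apply: sub => /=; apply.
Qed.

Lemma mpre_lt {d} {T : measurableType d} {R : realType} {f g : T -> R} :
  measurable_fun setT f -> measurable_fun setT g ->
  measurable [set x | f x < g x].
Proof.
move=> mf mg.
have := measurable_fun_ltr mf mg measurableT (Y := [set true]) I.
rewrite setTI; congr measurable; by apply/seteqP; split => x /=.
Qed.

Lemma G1 {d dW} {T : measurableType d} {TW : measurableType dW} {R : realType}
  (P : probability T R) (E : set T) (W : T -> TW) (f g : TW -> R) :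
  measurable E -> measurable_fun setT W -> measurable_fun setT f ->
  measurable_fun setT g ->
  P.-integrable E (EFin \o (f \o W)) -> P.-integrable E (EFin \o (g \o W)) ->
  (forall B, measurable B ->
    (\int[P]_(t in E `&` W @^-1` B) (f (W t))%:E <=
     \int[P]_(t in E `&` W @^-1` B) (g (W t))%:E)%E) ->
  {ae P, forall t, E t -> f (W t) <= g (W t)}.
Proof.
move=> mE mW mf mg fi gi hB.
have mB : measurable [set x | g x < f x] by exact: mpre_lt.
set M := E `&` W @^-1` [set x | g x < f x].
have mM : measurable M.
  by apply: measurableI => //; have := mW measurableT _ mB; rewrite setTI.
have fWm : measurable_fun setT (f \o W) by exact: measurableT_comp.
have gWm : measurable_fun setT (g \o W) by exact: measurableT_comp.
have fiM : P.-integrable M (EFin \o (f \o W)).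
  by apply: integrableS fi => //; exact: subIsetl.
have giM : P.-integrable M (EFin \o (g \o W)).
  by apply: integrableS gi => //; exact: subIsetl.
have PM : P M = 0%E.
  apply: (@G0 _ _ _ P M (fun t => f (W t) - g (W t))) => //.
  - apply: measurable_funB; exact: measurable_funTS.
  - apply/eqP; rewrite eq_le; apply/andP; split; last first.
      apply: integral_ge0 => t [_ /= h]; rewrite lee_fin subr_ge0 ltW //.
    under eq_integral do rewrite EFinB.
    rewrite integralB_EFin //.
    have := hB _ mB; rewrite -/M.
    rewrite (RI_E mM fiM) (RI_E mM giM) -EFinB !lee_fin subr_le0 => //.
  - by apply: aeW => t [_ /= h]; rewrite subr_gt0.
exists M; split => // t /= /not_implyP [Et].
by move/negP; rewrite -ltNge => h.
Qed.

Lemma G3 {d dW} {T : measurableType d} {TW : measurableType dW} {R : realType}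
  (P : probability T R) (E F : set T) (W : T -> TW) (p : TW -> R) (Q : set TW) :
  measurable E -> measurable F -> measurable_fun setT W -> measurable Q ->
  cond_exp_on P E W (\1_F) p -> {ae P, forall t, E t -> 0 < p (W t)} ->
  {ae P, forall t, E t -> F t -> Q (W t)} -> {ae P, forall t, E t -> Q (W t)}.
Proof.
move=> mE mF mW mQ [mp [pi hp]] ppos hQ.
set M := E `&` W @^-1` (~` Q).
have mM : measurable M.
  apply: measurableI => //; have := mW measurableT _ (measurableC mQ).
  by rewrite setTI.
have PMF : P (F `&` M) = 0%E.
  case: hQ => N [mN PN sub].
  apply/eqP; rewrite -measure_le0 -PN le_measure ?inE //; first exact: measurableI.
  by move=> t [Ft [Et nQ]]; apply: sub => /= /(_ Et Ft).
have PM : P M = 0%E.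
  apply: (@G0 _ _ _ P M (p \o W)) => //.
  - by apply: measurable_funTS; exact: measurableT_comp.
  - by rewrite -hp; [rewrite integral_indic | exact: measurableC].
  - by apply: filterS ppos => t h [Et _]; exact: h.
exists M; split => // t /= /not_implyP [Et nQ]; split => //.
Qed.

Lemma mpre_le {d} {T : measurableType d} {R : realType} {f g : T -> R} :
  measurable_fun setT f -> measurable_fun setT g ->
  measurable [set x | f x <= g x].
Proof.
move=> mf mg.
have := measurableC (mpre_lt mg mf); congr measurable.
by apply/seteqP; split => x /=; rewrite leNgt => /negP.
Qed.

Lemma integrable_ae_le {d} {T : measurableType d} {R : realType}
  (P : probability T R) (D : set T) (f g : T -> R) :
  measurable D -> measurable_fun D f -> P.-integrable D (EFin \o g) ->
  {ae P, forall t, D t -> `|f t| <= `|g t|} -> P.-integrable D (EFin \o f).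
Proof.
move=> mD mf gi hle.
have mfE : measurable_fun D (EFin \o f) by exact/measurable_EFinP.
apply/integrableP; split => //.
apply: le_lt_trans (integrableP _ _ _ gi).2.
apply: ae_ge0_le_integral => //.
- by apply: measurableT_comp => //.
- by apply: measurableT_comp => //; case/integrableP: gi.
Qed.

Lemma le_integral_ae {d} {T : measurableType d} {R : realType}
  (P : probability T R) (D : set T) (f g : T -> R) :
  measurable D -> P.-integrable D (EFin \o f) -> P.-integrable D (EFin \o g) ->
  {ae P, forall t, D t -> f t <= g t} ->
  (\int[P]_(x in D) (f x)%:E <= \int[P]_(x in D) (g x)%:E)%E.
Proof.
move=> mD fi gi hle.
have h0 : (0 <= \int[P]_(x in D) (g x - f x)%:E)%E.
  have -> : (\int[P]_(x in D) (g x - f x)%:E =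
      \int[P]_(x in D) (Num.max (g x - f x) 0)%:E)%E.
    apply: ae_eq_integral => //.
    - apply/measurable_EFinP; apply: measurable_funB.
      + by case/integrableP: gi => /measurable_EFinP.
      + by case/integrableP: fi => /measurable_EFinP.
    - apply/measurable_EFinP; apply: measurable_maxr => //.
      apply: measurable_funB.
      + by case/integrableP: gi => /measurable_EFinP.
      + by case/integrableP: fi => /measurable_EFinP.
    - apply: filterS hle => t h Dt; congr EFin.
      by apply/esym/max_idPl; rewrite subr_ge0 h.
  by apply: integral_ge0 => t _; rewrite lee_fin le_max lexx orbT.
move: h0; under eq_integral do rewrite EFinB.
rewrite integralB_EFin // (RI_E mD fi) (RI_E mD gi) -EFinB lee_fin subr_ge0.
by rewrite lee_fin.
Qed.

Lemma mAeq {d} {T : measurableType d} (A : T -> bool) (a : bool) :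
  measurable [set t | A t] -> measurable [set t | A t = a].
Proof.
move=> mA; case: a => //.
have := measurableC mA; congr measurable.
by apply/seteqP; split => t /=; case: (A t).
Qed.

Lemma step_mu {d dX} {T : measurableType d} {TX : measurableType dX}
  {R : realType} (P : probability T R) (X : T -> TX) (A S : T -> bool)
  (Y Ya : T -> R) (pia mua maa : TX -> R) (a : bool) :
  measurable_fun setT X -> measurable [set t | A t] -> measurable [set t | S t] ->
  measurable_fun setT Y -> measurable_fun setT Ya ->
  cond_exp_on P [set t | S t] X (\1_[set t | A t = a]) pia ->
  cond_exp_on P [set t | A t = a /\ S t] X Y mua ->
  cond_exp_on P [set t | A t = a /\ S t] X Ya maa ->
  {ae P, forall t, A t = a -> Y t = Ya t} ->
  {ae P, forall t, S t -> 0 < pia (X t)} ->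
  {ae P, forall t, S t -> mua (X t) = maa (X t)}.
Proof.
move=> mX mA mS mY mYa hpi [mmu [imu hmu]] [mm [im hm]] hcons hpos.
have mAa := mAeq A a mA.
have mE : measurable [set t | A t = a /\ S t] by exact: measurableI.
have h1 B : measurable B ->
  (\int[P]_(t in [set t | A t = a /\ S t] `&` X @^-1` B) (mua (X t))%:E =
   \int[P]_(t in [set t | A t = a /\ S t] `&` X @^-1` B) (maa (X t))%:E)%E.
  move=> mB; rewrite -hmu // -hm //.
  have mEB : measurable ([set t | A t = a /\ S t] `&` X @^-1` B).
    by apply: measurableI => //; have := mX measurableT _ mB; rewrite setTI.
  apply: ae_eq_integral => //.
  - by apply/measurable_EFinP; exact: measurable_funTS.
  - by apply/measurable_EFinP; exact: measurable_funTS.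
  - by apply: filterS hcons => t h [[At _] _]; rewrite h.
have le1 := G1 P _ X _ _ mE mX mmu mm imu im (fun B mB => ltac:(by rewrite (h1 B mB))).
have le2 := G1 P _ X _ _ mE mX mm mmu im imu (fun B mB => ltac:(by rewrite (h1 B mB))).
have g1 : {ae P, forall t, S t -> mua (X t) <= maa (X t)}.
  apply: (G3 P _ _ X _ _ mS mAa mX (mpre_le mmu mm) hpi hpos).
  by apply: filterS le1 => t h St At; exact: h (conj At St).
have g2 : {ae P, forall t, S t -> maa (X t) <= mua (X t)}.
  apply: (G3 P _ _ X _ _ mS mAa mX (mpre_le mm mmu) hpi hpos).
  by apply: filterS le2 => t h St At; exact: h (conj At St).
apply: filterS2 g1 g2 => t h1' h2' St.
by apply/le_anti; rewrite (h1' St) (h2' St).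
Qed.

Lemma icst {d} {T : measurableType d} {R : realType} (P : probability T R)
  (D : set T) (k : R) : measurable D -> P.-integrable D (EFin \o (fun _ => k)).
Proof. by move=> mD; exact: finite_measure_integrable_cst. Qed.

Lemma step_q0 {d dV} {T : measurableType d} {TV : measurableType dV}
  {R : realType} (P : probability T R) (V : T -> TV) (E F : set T) (qa : TV -> R) :
  measurable E -> measurable F -> measurable_fun setT V ->
  cond_exp_on P E V (\1_F) qa -> {ae P, forall t, E t -> 0 <= qa (V t)}.
Proof.
move=> mE mF mV [mq [iq hq]].
apply: (G1 P E V (fun _ => 0) qa mE mV (measurable_cst _) mq (icst P E 0 mE) iq).
move=> B mB; rewrite -hq // integral_indic //; last first.
  by apply: measurableI => //; have := mV measurableT _ mB; rewrite setTI.
by rewrite integral0.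
Qed.

Lemma step_q1 {d dV} {T : measurableType d} {TV : measurableType dV}
  {R : realType} (P : probability T R) (V : T -> TV) (E F G : set T)
  (qa qb : TV -> R) :
  measurable E -> measurable F -> measurable G -> measurable_fun setT V ->
  (forall t, F t \/ G t) -> (forall t, F t -> G t -> False) ->
  cond_exp_on P E V (\1_F) qa -> cond_exp_on P E V (\1_G) qb ->
  {ae P, forall t, E t -> qa (V t) + qb (V t) = 1}.
Proof.
move=> mE mF mG mV FG nFG [mqa [iqa hqa]] [mqb [iqb hqb]].
have mf : measurable_fun setT (fun v => qa v + qb v) by exact: measurable_funD.
have ifE : P.-integrable E (EFin \o ((fun v => qa v + qb v) \o V)).
  have := integrableD mE iqa iqb; apply: eq_integrable => // t _.
have h1 B : measurable B ->
  (\int[P]_(t in E `&` V @^-1` B) (qa (V t) + qb (V t))%:E =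
   \int[P]_(t in E `&` V @^-1` B) ((fun _ : TV => 1 : R) (V t))%:E)%E.
  move=> mB.
  have mM : measurable (E `&` V @^-1` B).
    by apply: measurableI => //; have := mV measurableT _ mB; rewrite setTI.
  under eq_integral do rewrite EFinD.
  rewrite (integralD_EFin (mu:=P) mM (f1:=qa \o V) (f2:=qb \o V)); last 2 first.
    by apply: integrableS iqa => //; exact: subIsetl.
    by apply: integrableS iqb => //; exact: subIsetl.
  rewrite -hqa // -hqb // !integral_indic //.
  rewrite -measureU //; last 3 first.
    exact: measurableI. exact: measurableI.
    by apply/seteqP; split => t // [[Ft _] [Gt _]]; exact: nFG Ft Gt.
  rewrite (@integral_cst _ _ _ P _ mM 1%E) mul1e; congr (P _).
  by apply/seteqP; split => t /=; [tauto | have := FG t; tauto].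
have le1 := G1 P E V _ _ mE mV mf (measurable_cst _) ifE (icst P E 1 mE)
  (fun B mB => ltac:(by rewrite (h1 B mB))).
have le2 := G1 P E V _ _ mE mV (measurable_cst _) mf (icst P E 1 mE) ifE
  (fun B mB => ltac:(by rewrite (h1 B mB))).
by apply: filterS2 le1 le2 => t h1' h2' Et; apply/le_anti; rewrite h1' ?h2'.
Qed.

Lemma isplit {d} {T : measurableType d} {R : realType} (P : probability T R)
  (M F : set T) (f : T -> \bar R) : measurable M -> measurable F ->
  measurable_fun M f ->
  (\int[P]_(x in M) f x = \int[P]_(x in M `&` F) f x + \int[P]_(x in M `&` ~` F) f x)%E.
Proof.
move=> mM mF mf.
have eM : M = (M `&` F) `|` (M `&` ~` F) by rewrite -setIUr setUCr setIT.
rewrite {1}eM integral_setU //; first exact: measurableI.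
- by apply: measurableI => //; exact: measurableC.
- by rewrite -eM.
- by apply/disj_setPLR => t [_ Ft] [_]; apply.
Qed.

Lemma toT {d dV} {T : measurableType d} {TV : measurableType dV} {R : realType}
  (P : probability T R) (S : set T) (V : T -> TV) (rho : TV -> R) (Q : set TV) :
  measurable S -> measurable_fun setT V -> measurable Q ->
  cond_exp_on P setT V (\1_S) rho -> {ae P, forall t, 0 < rho (V t)} ->
  {ae P, forall t, S t -> Q (V t)} -> {ae P, forall t, Q (V t)}.
Proof.
move=> mS mV mQ hr hpos hQ.
have : {ae P, forall t, setT t -> Q (V t)}.
  apply: (G3 P setT S V rho Q measurableT mS mV mQ hr).
    by apply: filterS hpos => t h _.
  by apply: filterS hQ => t h _.
by apply: filterS => t; apply.
Qed.

Lemma neq_negb (x y : bool) : x <> y -> x = ~~ y.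
Proof. by case: x; case: y. Qed.

Lemma negb_neq (x y : bool) : x = ~~ y -> x <> y.
Proof. by case: x; case: y. Qed.

Lemma step_R2 {d dX dV} {T : measurableType d} {TX : measurableType dX}
  {TV : measurableType dV} {R : realType} (P : probability T R)
  (X : T -> TX) (proj : TX -> TV) (A S : T -> bool) (Ya : T -> R)
  (mua maa mab : TX -> R) (taua n1a qa : TV -> R) (d1 : R) (a : bool) :
  measurable_fun setT X -> measurable_fun setT proj ->
  measurable [set t | A t] -> measurable [set t | S t] ->
  measurable_fun setT Ya -> P.-integrable setT (EFin \o Ya) ->
  {ae P, forall t, S t -> mua (X t) = maa (X t)} ->
  measurable_fun setT mua ->
  cond_exp_on P [set t | A t = a /\ S t] X Ya maa ->
  cond_exp_on P [set t | A t = ~~ a /\ S t] X Ya mab ->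
  cond_exp_on P [set t | S t] (fun t => proj (X t)) (fun t => mua (X t)) taua ->
  cond_exp_on P [set t | S t] (fun t => proj (X t)) Ya n1a ->
  cond_exp_on P [set t | S t] (fun t => proj (X t)) (\1_[set t | A t = ~~ a]) qa ->
  {ae P, forall t, S t -> `|maa (X t) - mab (X t)| <= d1} ->
  {ae P, forall t, S t ->
     `|n1a (proj (X t)) - taua (proj (X t))| <= d1 * qa (proj (X t))}.
Proof.
move=> mX mproj mA mS mYa iYa hmueq mmua [mmaa [imaa hmaa]] [mmab [imab hmab]]
  [mtau [itau htau]] [mn1 [in1 hn1]] [mq [iq hq]] hd1.
set V := fun t => proj (X t).
have mV : measurable_fun setT V by exact: measurableT_comp.
have mAa := mAeq A a mA.
have mAb := mAeq A (~~ a) mA.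
have mEa : measurable [set t | A t = a /\ S t] by exact: measurableI.
have mEb : measurable [set t | A t = ~~ a /\ S t] by exact: measurableI.
have mpre (U : set TV) : measurable U -> measurable (V @^-1` U).
  by move=> mU; have := mV measurableT _ mU; rewrite setTI.
have mpreX (U : set TX) : measurable U -> measurable (X @^-1` U).
  by move=> mU; have := mX measurableT _ mU; rewrite setTI.
have mXf (f : TX -> R) : measurable_fun setT f -> forall D, measurable_fun D (f \o X).
  by move=> mf D; apply: measurable_funTS; exact: measurableT_comp.
have imaaB : P.-integrable [set t | A t = ~~ a /\ S t] (EFin \o (maa \o X)).
  apply: (integrable_ae_le P _ _ (fun t => `|mab (X t)| + d1)) => //.
  - exact: mXf.
  - have := integrableD mEb (integrable_norm imab) (icst P _ d1 mEb).
    by apply: eq_integrable => // t _.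
  - apply: filterS hd1 => t h [_ St]; have hh := h St.
    have d10 : 0 <= d1 by exact: le_trans (normr_ge0 _) hh.
    rewrite /= [Z in _ <= Z]ger0_norm ?addr_ge0 //.
    have -> : maa (X t) = mab (X t) + (maa (X t) - mab (X t)) by rewrite addrC subrK.
    by apply: le_trans (ler_normD _ _) _; rewrite lerD2l.
have core B : measurable B ->
    `|Rintegral P ([set t | S t] `&` V @^-1` B) (taua \o V) -
      Rintegral P ([set t | S t] `&` V @^-1` B) (n1a \o V)| <=
    d1 * Rintegral P ([set t | S t] `&` V @^-1` B) (qa \o V).
  move=> mB.
  set M := [set t | S t] `&` V @^-1` B.
  have mM : measurable M by apply: measurableI => //; exact: mpre.
  have mC : measurable (proj @^-1` B).
    by have := mproj measurableT _ mB; rewrite setTI.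
  set Ma := [set t | A t = a /\ S t] `&` X @^-1` (proj @^-1` B).
  set Mb := [set t | A t = ~~ a /\ S t] `&` X @^-1` (proj @^-1` B).
  have mMa : measurable Ma by apply: measurableI => //; exact: mpreX.
  have mMb : measurable Mb by apply: measurableI => //; exact: mpreX.
  have eMa : M `&` [set t | A t = a] = Ma.
    by apply/seteqP; split => t /=; rewrite /M /Ma /V /=; tauto.
  have eMb : M `&` ~` [set t | A t = a] = Mb.
    apply/seteqP; split => t /=; rewrite /M /Mb /V /=.
      by move=> [[St Bt] h]; split => //; split => //; exact: neq_negb.
    by move=> [[h St] Bt]; split => //; exact: negb_neq.
  have MaE : Ma `<=` [set t | A t = a /\ S t] by exact: subIsetl.
  have MbE : Mb `<=` [set t | A t = ~~ a /\ S t] by exact: subIsetl.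
  have iYaMa : P.-integrable Ma (EFin \o Ya) by apply: integrableS iYa.
  have iYaM : P.-integrable M (EFin \o Ya) by apply: integrableS iYa.
  have imaaMb : P.-integrable Mb (EFin \o (maa \o X)) by apply: integrableS imaaB.
  have imabMb : P.-integrable Mb (EFin \o (mab \o X)) by apply: integrableS imab.
  have itauM : P.-integrable M (EFin \o (taua \o V)).
    by apply: integrableS itau => //; exact: subIsetl.
  have in1M : P.-integrable M (EFin \o (n1a \o V)).
    by apply: integrableS in1 => //; exact: subIsetl.
  have iqM : P.-integrable M (EFin \o (qa \o V)).
    by apply: integrableS iq => //; exact: subIsetl.
  have E1 : (\int[P]_(t in M) ((taua \o V) t)%:E)%E =
      (Rintegral P Ma Ya + Rintegral P Mb (maa \o X))%:E.
    rewrite /= -(htau B mB) (isplit P _ _ _ mM mAa); last by apply/measurable_EFinP; exact: mXf.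
    rewrite eMa eMb.
    have -> : (\int[P]_(x in Ma) (mua (X x))%:E = \int[P]_(x in Ma) (Ya x)%:E)%E.
      rewrite (hmaa _ mC); apply: ae_eq_integral => //.
      - by apply/measurable_EFinP; exact: mXf.
      - by apply/measurable_EFinP; exact: mXf.
      - by apply: filterS hmueq => t h [[_ St] _]; rewrite h.
    have -> : (\int[P]_(x in Mb) (mua (X x))%:E = \int[P]_(x in Mb) (maa (X x))%:E)%E.
      apply: ae_eq_integral => //.
      - by apply/measurable_EFinP; exact: mXf.
      - by apply/measurable_EFinP; exact: mXf.
      - by apply: filterS hmueq => t h [[_ St] _]; rewrite h.
    by rewrite (RI_E mMa iYaMa) (RI_E mMb imaaMb).
  have E2 : (\int[P]_(t in M) ((n1a \o V) t)%:E)%E =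
      (Rintegral P Ma Ya + Rintegral P Mb (mab \o X))%:E.
    rewrite /= -(hn1 B mB) (isplit P _ _ _ mM mAa); last first.
      by apply/measurable_EFinP; exact: measurable_funTS.
    rewrite eMa eMb (hmab _ mC).
    by rewrite (RI_E mMa iYaMa) (RI_E mMb imabMb).
  have E3 : (\int[P]_(t in M) ((qa \o V) t)%:E)%E = P Mb.
    rewrite /= -(hq B mB) integral_indic //; congr (P _).
    rewrite -eMb; apply/seteqP; split => t /=; rewrite /M /V /=.
      by move=> [h1 h2]; split => //; exact: negb_neq.
    by move=> [h1 h2]; split => //; exact: neq_negb.
  have R1 : Rintegral P M (taua \o V) = Rintegral P Ma Ya + Rintegral P Mb (maa \o X).
    by rewrite /Rintegral E1.
  have R2 : Rintegral P M (n1a \o V) = Rintegral P Ma Ya + Rintegral P Mb (mab \o X).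
    by rewrite /Rintegral E2.
  have R3 : Rintegral P M (qa \o V) = fine (P Mb) by rewrite /Rintegral E3.
  rewrite R1 R2 R3.
  have -> : forall x y z : R, (x + y) - (x + z) = y - z.
    by move=> x y z; rewrite opprD addrACA subrr add0r.
  have mbd (f g : T -> R) : P.-integrable Mb (EFin \o f) -> P.-integrable Mb (EFin \o g) ->
      {ae P, forall t, Mb t -> f t <= g t} -> Rintegral P Mb f <= Rintegral P Mb g.
    move=> fi gi h; have := le_integral_ae P Mb f g mMb fi gi h.
    by rewrite (RI_E mMb fi) (RI_E mMb gi) lee_fin.
  have iD : P.-integrable Mb (EFin \o (fun t => maa (X t) - mab (X t))).
    by have := integrableB mMb imaaMb imabMb; apply: eq_integrable => // t _.
  have iD' : P.-integrable Mb (EFin \o (fun t => mab (X t) - maa (X t))).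
    by have := integrableB mMb imabMb imaaMb; apply: eq_integrable => // t _.
  have ic := icst P Mb d1 mMb.
  have L1 : Rintegral P Mb (fun t => maa (X t) - mab (X t)) <= Rintegral P Mb (fun _ => d1).
    apply: mbd => //; apply: filterS hd1 => t h [[_ St] _].
    by move: (h St); rewrite ler_norml => /andP[].
  have L2 : Rintegral P Mb (fun t => mab (X t) - maa (X t)) <= Rintegral P Mb (fun _ => d1).
    apply: mbd => //; apply: filterS hd1 => t h [[_ St] _].
    by move: (h St); rewrite ler_norml lerNl opprB => /andP[].
  rewrite (RintegralB mMb imaaMb imabMb) Rintegral_cst // in L1.
  rewrite (RintegralB mMb imabMb imaaMb) Rintegral_cst // in L2.
  by rewrite ler_norml L1 andbT lerNl opprB.
have mM B : measurable B -> measurable ([set t | S t] `&` V @^-1` B).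
  by move=> mB; apply: measurableI => //; exact: mpre.
have iM B (f : TV -> R) : measurable B ->
    P.-integrable [set t | S t] (EFin \o (f \o V)) ->
    P.-integrable ([set t | S t] `&` V @^-1` B) (EFin \o (f \o V)).
  by move=> mB fi; apply: integrableS fi => //; (exact: mM || exact: subIsetl).
have iB1 : P.-integrable [set t | S t] (EFin \o ((fun v => taua v - n1a v) \o V)).
  by have := integrableB mS itau in1; apply: eq_integrable => // t _.
have iB2 : P.-integrable [set t | S t] (EFin \o ((fun v => n1a v - taua v) \o V)).
  by have := integrableB mS in1 itau; apply: eq_integrable => // t _.
have iQ : P.-integrable [set t | S t] (EFin \o ((fun v => d1 * qa v) \o V)).
  by have := integrableZl mS d1 iq; apply: eq_integrable => // t _.
have eB (B : set TV) (f g : TV -> R) : measurable B ->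
    P.-integrable [set t | S t] (EFin \o (f \o V)) ->
    P.-integrable [set t | S t] (EFin \o (g \o V)) ->
    (\int[P]_(t in [set t | S t] `&` V @^-1` B) (f (V t) - g (V t))%:E)%E =
    (Rintegral P ([set t | S t] `&` V @^-1` B) (f \o V) -
     Rintegral P ([set t | S t] `&` V @^-1` B) (g \o V))%:E.
  move=> mB fi gi; under eq_integral do rewrite EFinB.
  rewrite integralB_EFin //; try exact: mM; try exact: iM.
  by rewrite (RI_E (mM B mB) (iM B f mB fi)) (RI_E (mM B mB) (iM B g mB gi)).
have eQ (B : set TV) : measurable B ->
    (\int[P]_(t in [set t | S t] `&` V @^-1` B) (d1 * qa (V t))%:E)%E =
    (d1 * Rintegral P ([set t | S t] `&` V @^-1` B) (qa \o V))%:E.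
  move=> mB; under eq_integral do rewrite EFinM.
  rewrite integralZl //; try exact: mM; try exact: iM.
  by rewrite (RI_E (mM B mB) (iM B qa mB iq)).
have le1 := G1 P [set t | S t] V (fun v => taua v - n1a v) (fun v => d1 * qa v)
  mS mV (measurable_funB mtau mn1) (measurable_funM (measurable_cst _) mq) iB1 iQ
  (fun B mB => ltac:(by rewrite /= (eB B taua n1a mB itau in1) (eQ B mB) lee_fin;
     move: (core B mB); rewrite ler_norml => /andP[])).
have le2 := G1 P [set t | S t] V (fun v => n1a v - taua v) (fun v => d1 * qa v)
  mS mV (measurable_funB mn1 mtau) (measurable_funM (measurable_cst _) mq) iB2 iQ
  (fun B mB => ltac:(by rewrite /= (eB B n1a taua mB in1 itau) (eQ B mB) lee_fin;
     move: (core B mB); rewrite ler_norml lerNl opprB => /andP[])).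
apply: filterS2 le1 le2 => t h1 h2 St.
by rewrite ler_norml lerNl opprB h2 // h1.
Qed.


Lemma RI_le {d} {T : measurableType d} {R : realType} (P : probability T R)
  (D : set T) (f g : T -> R) : measurable D ->
  P.-integrable D (EFin \o f) -> P.-integrable D (EFin \o g) ->
  {ae P, forall t, D t -> f t <= g t} -> Rintegral P D f <= Rintegral P D g.
Proof.
move=> mD fi gi h; have := le_integral_ae P D f g mD fi gi h.
by rewrite (RI_E mD fi) (RI_E mD gi) lee_fin.
Qed.

Lemma absbound {d} {T : measurableType d} {R : realType} (P : probability T R)
  (D : set T) (f g h : T -> R) : measurable D ->
  P.-integrable D (EFin \o f) -> P.-integrable D (EFin \o g) ->
  P.-integrable D (EFin \o h) ->
  {ae P, forall t, D t -> `|f t - g t| <= h t} ->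
  `|Rintegral P D f - Rintegral P D g| <= Rintegral P D h.
Proof.
move=> mD fi gi hi hb.
have i1 : P.-integrable D (EFin \o (fun t => f t - g t)).
  by have := integrableB mD fi gi; apply: eq_integrable => // t _.
have i2 : P.-integrable D (EFin \o (fun t => g t - f t)).
  by have := integrableB mD gi fi; apply: eq_integrable => // t _.
have L1 := RI_le P D _ _ mD i1 hi
  (filterS (fun t (hh : D t -> `|f t - g t| <= h t) Dt =>
     le_trans (ler_norm _) (hh Dt)) hb).
have L2 : Rintegral P D (fun t => g t - f t) <= Rintegral P D h.
  apply: RI_le => //; apply: filterS hb => t hh Dt.
  by apply: le_trans (ler_norm _) _; rewrite distrC; exact: hh.
rewrite (RintegralB mD fi gi) in L1.
rewrite (RintegralB mD gi fi) in L2.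
by rewrite ler_norml L1 andbT lerNl opprB.
Qed.

Lemma RI_ae {d} {T : measurableType d} {R : realType} (P : probability T R)
  (D : set T) (f g : T -> R) : measurable D ->
  measurable_fun D f -> measurable_fun D g ->
  {ae P, forall t, D t -> f t = g t} -> Rintegral P D f = Rintegral P D g.
Proof.
move=> mD mf mg h; rewrite /Rintegral; congr fine.
apply: ae_eq_integral => //; [exact/measurable_EFinP | exact/measurable_EFinP |].
by apply: filterS h => t hh Dt; rewrite /= hh.
Qed.

Lemma mpre_eqc {d} {T : measurableType d} {R : realType} (f : T -> R) (c : R) :
  measurable_fun setT f -> measurable [set x | f x = c].
Proof.
move=> mf; have := mf measurableT [set c] (measurable_set1 c); rewrite setTI.
by congr measurable; apply/seteqP; split => x /=.
Qed.

Lemma div_bound {R : realFieldType} (I T Q p d1 d2 : R) : 0 < p ->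
  `|I - T| <= d2 * p + d1 * Q ->
  T * p^-1 - d1 * (Q * p^-1) - d2 <= I * p^-1 <= T * p^-1 + d1 * (Q * p^-1) + d2.
Proof.
move=> p0 /[dup] h; rewrite ler_norml => /andP[h1 h2].
have r0 : 0 < p^-1 by rewrite invr_gt0.
have pr : p * p^-1 = 1 by rewrite mulfV // gt_eqF.
have e : (d2 * p + d1 * Q) * p^-1 = d2 + d1 * (Q * p^-1).
  by rewrite mulrDl -mulrA pr mulr1 mulrA.
have k1 := ler_wpM2r (ltW r0) h1; have k2 := ler_wpM2r (ltW r0) h2.
rewrite e mulrBl in k2; rewrite mulNr e mulrBl in k1.
apply/andP; split; lra.
Qed.



Theorem theorem2 (R : realType) (d dX dV : measure_display)
  (T : measurableType d) (P : probability T R)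
  (TX : measurableType dX) (TV : measurableType dV)
  (X : T -> TX) (proj : TX -> TV)
  (A S : T -> bool) (Y : T -> R) (Yp : bool -> T -> R)
  (pi mu : bool -> TX -> R) (rho : TV -> R) (tau : bool -> TV -> R)
  (q : bool -> TV -> R)
  (m : bool -> bool -> TX -> R) (n0 n1 : bool -> TV -> R)
  (d1 d2 : R) :
  let V := fun t => proj (X t) in
  measurable_fun setT X -> measurable_fun setT proj ->
  measurable [set t | A t] -> measurable [set t | S t] ->
  measurable_fun setT Y -> (forall a, measurable_fun setT (Yp a)) ->
  (forall a, P.-integrable setT (EFin \o Yp a)) ->
  (0 < P [set t | ~~ S t])%E ->
  (* nuisance functions (versions of the conditional expectations) *)
  (forall a, cond_exp_on P [set t | S t] X (\1_[set t | A t = a]) (pi a)) ->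
  cond_exp_on P setT V (\1_[set t | S t]) rho ->
  (forall a, cond_exp_on P [set t | A t = a /\ S t] X Y (mu a)) ->
  (forall a, cond_exp_on P [set t | S t] V (fun t => mu a (X t)) (tau a)) ->
  (* q a (V) = P(A = 1 - a | V, S = 1) *)
  (forall a, cond_exp_on P [set t | S t] V (\1_[set t | A t = ~~ a]) (q a)) ->
  (* m a a' (X) = E[Y^a | X, A = a', S = 1] *)
  (forall a a', cond_exp_on P [set t | A t = a' /\ S t] X (Yp a) (m a a')) ->
  (* n0 a (V) = E[Y^a | V, S = 0],  n1 a (V) = E[Y^a | V, S = 1] *)
  (forall a, cond_exp_on P [set t | ~~ S t] V (Yp a) (n0 a)) ->
  (forall a, cond_exp_on P [set t | S t] V (Yp a) (n1 a)) ->
  (* (i) consistency *)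
  (forall a, {ae P, forall t, A t = a -> Y t = Yp a t}) ->
  (* (ii) treatment positivity, a.s. under P( . | S = 1) *)
  (forall a, {ae P, forall t, S t -> 0 < pi a (X t)}) ->
  (* (iii) selection positivity *)
  {ae P, forall t, 0 < rho (V t)} ->
  (* (iv) *)
  0 < d1 ->
  (forall a, {ae P, forall t, S t -> `|m a true (X t) - m a false (X t)| <= d1}) ->
  (* (v) *)
  0 < d2 ->
  (forall a, {ae P, forall t, `|n0 a (V t) - n1 a (V t)| <= d2}) ->
  let psi a := (\int[P]_t (Yp a t)%:E)%E in
  let theta a := cond_mean P [set t | ~~ S t] (Yp a) in
  let PS0 := P [set t | ~~ S t] in
  let Etau a := (\int[P]_t (tau a (V t))%:E)%E in
  let Eq a := (\int[P]_t (q a (V t))%:E)%E in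
  let Etau0 a := cond_mean P [set t | ~~ S t] (fun t => tau a (V t)) in
  let Eq0 a := cond_mean P [set t | ~~ S t] (fun t => q a (V t)) in
  let Ediff := (\int[P]_t (tau true (V t) - tau false (V t))%:E)%E in
  let Ediff0 := cond_mean P [set t | ~~ S t]
                  (fun t => tau true (V t) - tau false (V t)) in
  (forall a : bool,
     (Etau a - d1%:E * Eq a - d2%:E * PS0 <= psi a <=
      Etau a + d1%:E * Eq a + d2%:E * PS0)%E /\
     (Etau0 a - d1%:E * Eq0 a - d2%:E <= theta a <=
      Etau0 a + d1%:E * Eq0 a + d2%:E)%E) /\
  (Ediff - d1%:E - (2 * d2)%:E * PS0 <= psi true - psi false <=
   Ediff + d1%:E + (2 * d2)%:E * PS0)%E /\
  (Ediff0 - d1%:E - (2 * d2)%:E <= theta true - theta false <=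
   Ediff0 + d1%:E + (2 * d2)%:E)%E.
Proof.
move=> V mX mproj mA mS mY mYp iYp PS0pos hpi hrho hmu htau hq hm hn0 hn1
  hcons hpos hrhopos d1pos hd1 d2pos hd2 psi theta PS0 Etau Eq Etau0 Eq0 Ediff Ediff0.
have mV : measurable_fun setT V by exact: measurableT_comp.
pose S1 := [set t | S t].
pose S0 := [set t | ~~ S t].
have mS1 : measurable S1 by [].
have eS0 : ~` S1 = S0 by apply/seteqP; split => t; rewrite /S1 /S0 /=; case: (S t).
have mS0 : measurable S0 by rewrite -eS0; exact: measurableC.
have eS (f : T -> \bar R) : measurable_fun setT f ->
    (\int[P]_t f t = \int[P]_(t in S1) f t + \int[P]_(t in S0) f t)%E.
  by move=> mf; rewrite (isplit P setT S1 f measurableT mS1 mf) !setTI eS0.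
have mVf (f : TV -> R) : measurable_fun setT f -> forall D, measurable_fun D (f \o V).
  by move=> mf D; apply: measurable_funTS; exact: measurableT_comp.
have P0E : P S0 = (fine (P S0))%:E by rewrite fineK // fin_num_measure.
have P1E : P S1 = (fine (P S1))%:E by rewrite fineK // fin_num_measure.
set p0 := fine (P S0).
have p0pos : 0 < p0 by rewrite -lte_fin -P0E.
have PS1 : fine (P S1) + p0 = 1.
  apply: EFin_inj; rewrite EFinD -P1E -P0E -measureU //; last first.
    by apply/seteqP; split => t //; rewrite /S1 /S0 /= => -[->].
  have -> : S1 `|` S0 = setT.
    by apply/seteqP; split => t // _; rewrite /S1 /S0 /=; case: (S t); [left|right].
  exact: probability_setT.
have mAb (b : bool) : measurable [set t | A t = b] by exact: mAeq.
have qpos a : {ae P, forall t, 0 <= q a (V t)}.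
  apply: (toT P S1 V rho [set v | 0 <= q a v] mS1 mV _ hrho hrhopos).
    exact: mpre_le (measurable_cst _) (hq a).1.
  exact: (step_q0 P V S1 [set t | A t = ~~ a] (q a) mS1 (mAb _) mV (hq a)).
have qsum a : {ae P, forall t, q a (V t) + q (~~ a) (V t) = 1}.
  apply: (toT P S1 V rho [set v | q a v + q (~~ a) v = 1] mS1 mV _ hrho hrhopos).
    by apply: mpre_eqc; apply: measurable_funD; [exact: (hq a).1 | exact: (hq (~~ a)).1].
  apply: (step_q1 P V S1 [set t | A t = ~~ a] [set t | A t = ~~ ~~ a] (q a) (q (~~ a))
    mS1 (mAb _) (mAb _) mV _ _ (hq a) (hq (~~ a))).
  - by move=> t /=; case: (A t); case: (a); auto.
  - by move=> t /= ->; case: (a).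
have qle1 a : {ae P, forall t, q a (V t) <= 1}.
  apply: filterS2 (qsum a) (qpos (~~ a)) => t h1 h2.
  by rewrite -h1 lerDl.
have R2T a : {ae P, forall t, `|n1 a (V t) - tau a (V t)| <= d1 * q a (V t)}.
  have hd1' : {ae P, forall t, S t -> `|m a a (X t) - m a (~~ a) (X t)| <= d1}.
    move: (hd1 a); case: (a) => //= h; apply: filterS h => t h St.
    by rewrite distrC; exact: h.
  have hmueq := step_mu P X A S Y (Yp a) (pi a) (mu a) (m a a) a mX mA mS mY
    (mYp a) (hpi a) (hmu a) (hm a a) (hcons a) (hpos a).
  have h := step_R2 P X proj A S (Yp a) (mu a) (m a a) (m a (~~ a)) (tau a)
    (n1 a) (q a) d1 a mX mproj mA mS (mYp a) (iYp a) hmueq (hmu a).1 (hm a a)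
    (hm a (~~ a)) (htau a) (hn1 a) (hq a) hd1'.
  apply: (toT P S1 V rho [set v | `|n1 a v - tau a v| <= d1 * q a v] mS1 mV _
    hrho hrhopos h).
  apply: mpre_le.
    apply: measurableT_comp; first exact: normr_measurable.
    by apply: measurable_funB; [exact: (hn1 a).1 | exact: (htau a).1].
  by apply: measurable_funM; [exact: measurable_cst | exact: (hq a).1].
have tri (x y z : R) : `|z| <= `|x| + `|x - y| + `|y - z|.
  rewrite {1}(_ : z = x - (x - y) - (y - z)); last by ring.
  apply: le_trans (ler_normB _ _) _; rewrite lerD2r.
  exact: ler_normB.
have iS0q a : P.-integrable S0 (EFin \o (q a \o V)).
  apply: (integrable_ae_le P S0 _ (fun _ => 1) mS0 (mVf _ (hq a).1 _) (icst P S0 1 mS0)).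
  apply: filterS2 (qpos a) (qle1 a) => t h1 h2 _.
  by rewrite normr1 ger0_norm.
have iS0tau a : P.-integrable S0 (EFin \o (tau a \o V)).
  apply: (integrable_ae_le P S0 _ (fun t => `|n0 a (V t)| + (d2 + d1)) mS0
    (mVf _ (htau a).1 _)).
    have := integrableD mS0 (integrable_norm (hn0 a).2.1) (icst P S0 (d2 + d1) mS0).
    by apply: eq_integrable => // t _.
  have hh : {ae P, forall t, `|n1 a (V t) - tau a (V t)| <= d1 * q a (V t) /\
      q a (V t) <= 1}.
    by apply: filterS2 (R2T a) (qle1 a) => t h1 h2; split.
  apply: filterS2 (hd2 a) hh => t h [h1 h2] _.
  rewrite [Z in _ <= Z]ger0_norm; last by rewrite addr_ge0 // addr_ge0 // ltW.
  apply: le_trans (tri (n0 a (V t)) (n1 a (V t)) _) _.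
  have : d1 * q a (V t) <= d1 by rewrite -[Z in _ <= Z]mulr1 ler_wpM2l // ltW.
  move: h h1 => /=; lra.
pose I1 a := Rintegral P S1 (n1 a \o V).
pose I0 a := Rintegral P S0 (n0 a \o V).
pose Ts a := Rintegral P S1 (tau a \o V).
pose Tn a := Rintegral P S0 (tau a \o V).
pose Qs a := Rintegral P S1 (q a \o V).
pose Qn a := Rintegral P S0 (q a \o V).
have e1 a : (\int[P]_(t in S1) (Yp a t)%:E = \int[P]_(t in S1) (n1 a (V t))%:E)%E.
  by have := (hn1 a).2.2 setT measurableT; rewrite preimage_setT setIT.
have e0 a : (\int[P]_(t in S0) (Yp a t)%:E = \int[P]_(t in S0) (n0 a (V t))%:E)%E.
  by have := (hn0 a).2.2 setT measurableT; rewrite preimage_setT setIT.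
have Fpsi a : psi a = (I1 a + I0 a)%:E.
  rewrite /psi eS; last exact/measurable_EFinP.
  by rewrite e1 e0 (RI_E mS1 (hn1 a).2.1) (RI_E mS0 (hn0 a).2.1).
have Ftau a : Etau a = (Ts a + Tn a)%:E.
  rewrite /Etau eS; last by apply/measurable_EFinP; exact: mVf (htau a).1 _.
  by rewrite (RI_E mS1 (htau a).2.1) (RI_E mS0 (iS0tau a)).
have Fq a : Eq a = (Qs a + Qn a)%:E.
  rewrite /Eq eS; last by apply/measurable_EFinP; exact: mVf (hq a).1 _.
  by rewrite (RI_E mS1 (hq a).2.1) (RI_E mS0 (iS0q a)).
have Ftheta a : theta a = (I0 a * p0^-1)%:E.
  by rewrite /theta /cond_mean e0 (RI_E mS0 (hn0 a).2.1).
have Ftau0 a : Etau0 a = (Tn a * p0^-1)%:E.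
  by rewrite /Etau0 /cond_mean (RI_E mS0 (iS0tau a)).
have Fq0 a : Eq0 a = (Qn a * p0^-1)%:E.
  by rewrite /Eq0 /cond_mean (RI_E mS0 (iS0q a)).
have idq (D : set T) a : measurable D -> D `<=` S1 \/ D `<=` S0 ->
    P.-integrable D (EFin \o (fun t => d1 * q a (V t))).
  move=> mD [DS|DS].
    have := integrableZl mD d1 (integrableS mS1 mD DS (hq a).2.1).
    by apply: eq_integrable => // t _.
  have := integrableZl mD d1 (integrableS mS0 mD DS (iS0q a)).
  by apply: eq_integrable => // t _.
have B1 a : `|I1 a - Ts a| <= d1 * Qs a.
  have e : Rintegral P S1 (fun t => d1 * q a (V t)) = d1 * Qs a.
    by rewrite RintegralZl //; exact: (hq a).2.1.
  rewrite -e; apply: absbound => //.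
  - exact: (hn1 a).2.1.
  - exact: (htau a).2.1.
  - exact: (idq S1 a mS1 (or_introl (fun _ h => h))).
  - by apply: filterS (R2T a) => t h _.
have B2 a : `|I0 a - Tn a| <= d2 * p0 + d1 * Qn a.
  have ih2 := idq S0 a mS0 (or_intror (fun _ h => h)).
  have e : Rintegral P S0 (fun t => d2 + d1 * q a (V t)) = d2 * p0 + d1 * Qn a.
    rewrite (RintegralD mS0 (icst P S0 d2 mS0) ih2) Rintegral_cst //.
    by rewrite RintegralZl //; exact: (iS0q a).
  rewrite -e; apply: absbound => //.
  - exact: (hn0 a).2.1.
  - have := integrableD mS0 (icst P S0 d2 mS0) ih2.
    by apply: eq_integrable => // t _.
  apply: filterS2 (hd2 a) (R2T a) => t h1 h2 _ /=.
  rewrite (_ : n0 a (V t) - tau a (V t) =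
    (n0 a (V t) - n1 a (V t)) + (n1 a (V t) - tau a (V t))); last by ring.
  by apply: le_trans (ler_normD _ _) _; apply: lerD.
have Sq (D : set T) a : measurable D -> D `<=` S1 \/ D `<=` S0 ->
    Rintegral P D (q a \o V) + Rintegral P D (q (~~ a) \o V) = fine (P D).
  move=> mD hD.
  have [ia ib] : P.-integrable D (EFin \o (q a \o V)) /\
                 P.-integrable D (EFin \o (q (~~ a) \o V)).
    case: hD => DS; split.
    - exact: integrableS mS1 mD DS (hq a).2.1.
    - exact: integrableS mS1 mD DS (hq (~~ a)).2.1.
    - exact: integrableS mS0 mD DS (iS0q a).
    - exact: integrableS mS0 mD DS (iS0q (~~ a)).
  rewrite -(RintegralD mD ia ib).
  rewrite (RI_ae P D _ (fun _ => 1) mD _ (measurable_cst _)).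
  - by rewrite Rintegral_cst // mul1r.
  - by apply: measurable_funD; apply: mVf; [exact: (hq a).1 | exact: (hq (~~ a)).1].
  - by apply: filterS (qsum a) => t h _.
have intB (D : set T) (f g : T -> R) : measurable D ->
    P.-integrable D (EFin \o f) -> P.-integrable D (EFin \o g) ->
    (\int[P]_(t in D) (f t - g t)%:E = (Rintegral P D f - Rintegral P D g)%:E)%E.
  move=> mD fi gi; under eq_integral do rewrite EFinB.
  by rewrite integralB_EFin // (RI_E mD fi) (RI_E mD gi).
have FEdiff : Ediff = (Ts true - Ts false + (Tn true - Tn false))%:E.
  rewrite /Ediff eS; last first.
    apply/measurable_EFinP; apply: measurable_funB; apply: mVf; exact: (htau _).1.
  rewrite (intB _ (tau true \o V) (tau false \o V) mS1 (htau true).2.1 (htau false).2.1).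
  by rewrite (intB _ (tau true \o V) (tau false \o V) mS0 (iS0tau true) (iS0tau false)).
have FEdiff0 : Ediff0 = ((Tn true - Tn false) * p0^-1)%:E.
  rewrite /Ediff0 /cond_mean.
  by rewrite (intB _ (tau true \o V) (tau false \o V) mS0 (iS0tau true) (iS0tau false)).
have PS0E : PS0 = p0%:E by rewrite /PS0 P0E.
have Qs_sum := Sq S1 true mS1 (or_introl (fun _ h => h)).
have Qn_sum := Sq S0 true mS0 (or_intror (fun _ h => h)).
have Qn_sum' : Qn true + Qn false = p0 by exact: Qn_sum.
have hdn : d1 * Qn true + d1 * Qn false = d1 * p0 by rewrite -mulrDr Qn_sum'.
have hdsum : d1 * Qs true + d1 * Qs false + d1 * Qn true + d1 * Qn false = d1.
  have : Qs true + Qs false + Qn true + Qn false = 1.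
    have Qs_sum' : Qs true + Qs false = fine (P S1) by exact: Qs_sum.
    by rewrite -PS1 -Qs_sum' -Qn_sum'; ring.
  by move/(congr1 (fun x => d1 * x)); rewrite !mulrDr mulr1.
split.
  move=> a; rewrite Fpsi Ftau Fq Ftheta Ftau0 Fq0 PS0E.
  rewrite -!EFinM -!EFinB -!EFinD !lee_fin.
  have := div_bound (I0 a) (Tn a) (Qn a) p0 d1 d2 p0pos (B2 a).
  have := B1 a; have := B2 a.
  rewrite !ler_norml => /andP[? ?] /andP[? ?] /andP[? ?].
  by split; apply/andP; split; lra.
split.
  rewrite !Fpsi FEdiff PS0E -!EFinM -!EFinB -!EFinD !lee_fin.
  have := B1 true; have := B2 true; have := B1 false; have := B2 false.
  rewrite !ler_norml => /andP[? ?] /andP[? ?] /andP[? ?] /andP[? ?].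
  by apply/andP; split; lra.
rewrite !Ftheta FEdiff0 -?EFinM -!EFinB -!EFinD !lee_fin.
have hb : `|(I0 true - I0 false) - (Tn true - Tn false)| <= (2 * d2) * p0 + d1 * p0.
  have := B2 true; have := B2 false.
  rewrite !ler_norml => /andP[? ?] /andP[? ?].
  move=> *; apply/andP; split; lra.
have := div_bound _ _ _ _ _ _ p0pos hb.
by rewrite mulfV ?gt_eqF // mulr1 !mulrBl.
Qed.
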